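(* Let $V$ be a ground model, $\kappa$ an infinite cardinal, and $\mathbb{A}\in V$ an atomless Boolean algebra. If $\dot{\mathcal{U}}$ and $\dot{\mathcal{V}}$ are $\mathbb{M}_\kappa$-names for ultrafilters on $\mathbb{A}$ such that $\Vdash_{\mathbb{M}_\kappa}\dot{\mathcal{U}}\neq\dot{\mathcal{V}}$, then for every $\varepsilon>0$ there are $p\in\mathbb{M}_\kappa$ and $C\in\mathbb{A}$ such that $\lambda_\kappa(p)>1/4-\varepsilon$ and $p\Vdash C\in\dot{\mathcal{U}}\triangle\dot{\mathcal{V}}$.
   Context: $\mathbb{M}_\kappa=Bor(2^\kappa)/\mathcal{N}_\kappa$ is the measure algebra of the standard product measure $\lambda_\kappa$ on $2^\kappa$ ($\lambda_\kappa$ also denotes the induced strictly positive measure on $\mathbb{M}_\kappa$), used as a forcing notion. An $\mathbb{M}_\kappa$-name for an ultrafilter on $\mathbb{A}$ is a name $\dot{\mathcal{U}}$ with $\Vdash_{\mathbb{M}_\kappa}$ ''$\dot{\mathcal{U}}$ is an ultrafilter on $\mathbb{A}$''. *)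

(* Defs.v *)
From HB Require Import structures.
From Stdlib Require Lists.List.
From mathcomp Require Import all_boot all_order all_algebra.
From mathcomp Require Import all_classical all_reals all_analysis.
Set Implicit Arguments. Unset Strict Implicit. Unset Printing Implicit Defensive.
Import Order.TTheory GRing.Theory Num.Theory.
Local Open Scope classical_set_scope.
Local Open Scope ring_scope.

Definition cyl (K : Type) : set (set (K -> bool)) :=
  [set A | exists (i : K) (b : bool), A = [set f | f i = b]].

Definition cantor_cube (K : Type) := g_sigma_algebraType (@cyl K).

(* lam is the standard product measure lambda_K on 2^K: every basic cylinder
   fixing n distinct coordinates has measure 2^-n (this determines lam uniquely). *)
Definition std_product_measure (R : realType) (K : Type)
  (lam : {measure set (cantor_cube K) -> \bar R}) : Prop :=
  forall (s : seq K) (b : K -> bool), Stdlib.Lists.List.NoDup s ->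
    lam [set f : cantor_cube K | forall i, Stdlib.Lists.List.In i s -> f i = b i]
      = ((2 ^-1) ^+ size s)%:E.

(* X <= Y in the measure algebra M_K (inclusion modulo lam-null sets). *)
Definition mle (R : realType) (K : Type)
  (lam : {measure set (cantor_cube K) -> \bar R}) (X Y : set (cantor_cube K)) :=
  lam (X `\` Y) = 0%E.

Definition symdiff (T : Type) (X Y : set T) : set T := (X `\` Y) `|` (Y `\` X).

Definition atomless (d : Order.disp_t) (A : ctbDistrLatticeType d) : Prop :=
  forall a : A, a != \bot%O -> exists b : A, (\bot < b < a)%O.

(* An M_K-name for an ultrafilter on A (A in the ground model), represented by its
   Boolean values u a = [[ a-check \in U ]] (elements of M_K, given by measurable
   representatives); the condition says that
   ||- "U is an ultrafilter on A" holds, i.e. each ultrafilter axiom has Boolean value 1. *)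
Definition ultrafilter_name (R : realType) (K : Type)
  (lam : {measure set (cantor_cube K) -> \bar R})
  (d : Order.disp_t) (A : ctbDistrLatticeType d) (u : A -> set (cantor_cube K)) : Prop :=
  (forall a, measurable (u a)) /\
  [/\       mle lam setT (u \top%O),
      mle lam (u \bot%O) set0,
      (forall a b, mle lam (u a `&` u b) (u (Order.meet a b))),
      (forall a b, (a <= b)%O -> mle lam (u a) (u b))
    & (forall a, mle lam setT (u a `|` u (Order.compl a)))].

(* ||- U <> V :  the Boolean value  sup_a [[ a \in U triangle V ]]  equals 1 in M_K,
   i.e. no nonzero condition is incompatible with every [[a \in U triangle V]]. *)
Definition forces_neq (R : realType) (K : Type)
  (lam : {measure set (cantor_cube K) -> \bar R})
  (d : Order.disp_t) (A : ctbDistrLatticeType d) (u v : A -> set (cantor_cube K)) : Prop :=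
  forall p : set (cantor_cube K), measurable p ->
    (forall a, lam (p `&` symdiff (u a) (v a)) = 0%E) -> lam p = 0%E.

(* Main.v *)
Require Import Defs.
From HB Require Import structures.
From mathcomp Require Import all_boot all_order all_algebra.
From mathcomp Require Import all_classical all_reals all_analysis.
From mathcomp Require Import lra.
Import Order.TTheory GRing.Theory Num.Theory.
Import Order.CTheory.
Local Open Scope classical_set_scope.
Local Open Scope ring_scope.
Set Implicit Arguments. Unset Strict Implicit.
Import Order.CTheory.
Section Aux.
Context (R : realType) (K : Type) (lam : {measure set (cantor_cube K) -> \bar R}).
Hypothesis lamT : lam setT = 1%E.
Local Notation T := (cantor_cube K).

Definition mu (X : set T) : R := fine (lam X).

Lemma muE X : measurable X -> lam X = (mu X)%:E.
Proof.
move=> mX; rewrite /mu fineK // ge0_fin_numE ?measure_ge0 //.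
apply: (le_lt_trans (y := lam setT)); first by apply: le_measure; rewrite ?inE.
by rewrite lamT ltry.
Qed.

Lemma mu_ge0 X : 0 <= mu X.
Proof. exact/fine_ge0/measure_ge0. Qed.

Lemma mu_le X Y : measurable X -> measurable Y -> X `<=` Y -> mu X <= mu Y.
Proof.
move=> mX mY XY; rewrite -lee_fin -!muE //; apply: le_measure; rewrite ?inE //.
Qed.

Lemma mu_U2 X Y : measurable X -> measurable Y -> mu (X `|` Y) <= mu X + mu Y.
Proof.
move=> mX mY; rewrite -lee_fin EFinD -!muE //; last exact: measurableU.
exact: measureU2.
Qed.

Lemma mu_U X Y : measurable X -> measurable Y -> X `&` Y = set0 ->
  mu (X `|` Y) = mu X + mu Y.
Proof.
move=> mX mY XY; apply/eqP; rewrite -eqe EFinD -!muE //; last exact: measurableU.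
by rewrite measureU.
Qed.

Lemma mu_DI X Y : measurable X -> measurable Y ->
  mu X = mu (X `\` Y) + mu (X `&` Y).
Proof.
move=> mX mY; apply/eqP; rewrite -eqe EFinD -!muE //;
  [exact/eqP/measureDI|exact: measurableI|exact: measurableD].
Qed.

Lemma mu_T : mu setT = 1.
Proof. by rewrite /mu lamT. Qed.

Lemma ae_of_mle X Y : measurable X -> measurable Y -> mle lam X Y ->
  {ae lam, forall w, X w -> Y w}.
Proof.
move=> mX mY h; exists (X `\` Y); split => //; first exact: measurableD.
by move=> w /= /not_implyP [? ?]; split.
Qed.

Lemma ae_mu_le X Y : measurable X -> measurable Y ->
  {ae lam, forall w, X w -> Y w} -> mu X <= mu Y.
Proof.
move=> mX mY [M [mM M0 sub]].
apply: (le_trans (y := mu (Y `|` M))).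
  apply: mu_le => //; first exact: measurableU.
  move=> w Xw; have [Yw|nYw] := pselect (Y w); first by left.
  by right; apply: sub => /= h; exact: nYw (h Xw).
apply: (le_trans (mu_U2 mY mM)).
by have := muE mM; rewrite M0 => /esym/eqP; rewrite eqe => /eqP ->; rewrite addr0.
Qed.

End Aux.
Section Ult.
Context (R : realType) (K : Type) (lam : {measure set (cantor_cube K) -> \bar R}).
Local Notation T := (cantor_cube K).
Context (d : Order.disp_t) (A : ctbDistrLatticeType d) (u : A -> set T).
Hypothesis hu : ultrafilter_name lam u.

Lemma ae_mle X Y : measurable X -> measurable Y -> mle lam X Y ->
  {ae lam, forall w, X w -> Y w}.
Proof.
move=> mX mY h; exists (X `\` Y); split => //; first exact: measurableD.
by move=> w /= /not_implyP [? ?]; split.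
Qed.

Lemma aeI (P Q : T -> Prop) : {ae lam, forall w, P w} -> {ae lam, forall w, Q w} ->
  {ae lam, forall w, P w /\ Q w}.
Proof.
move=> hP hQ; apply: (negligibleS _ (negligibleU hP hQ)).
move=> w /= h; have [p|p] := pselect (P w); last by left.
by right => q; apply: h.
Qed.

Lemma aeS (P Q : T -> Prop) : (forall w, P w -> Q w) -> {ae lam, forall w, P w} ->
  {ae lam, forall w, Q w}.
Proof.
move=> PQ hP; apply: (negligibleS _ hP) => w /= h p; exact/h/PQ.
Qed.

Let mu_ a : measurable (u a). Proof. by case: hu. Qed.

Lemma uf_meet a b : {ae lam, forall w, u a w -> u b w -> u (Order.meet a b) w}.
Proof.
case: hu => _ [_ _ hm _ _].
have := ae_mle (measurableI _ _ (mu_ a) (mu_ b)) (mu_ (Order.meet a b)) (hm a b).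
by apply: filterS => w h ? ?; apply: h.
Qed.

Lemma uf_le a b : (a <= b)%O -> {ae lam, forall w, u a w -> u b w}.
Proof.
case: hu => _ [_ _ _ hl _] ab.
exact: ae_mle (mu_ a) (mu_ b) (hl a b ab).
Qed.

Lemma uf_ult a : {ae lam, forall w, u a w \/ u (Order.compl a) w}.
Proof.
case: hu => _ [_ _ _ _ hc].
have := ae_mle measurableT (measurableU _ _ (mu_ a) (mu_ (Order.compl a))) (hc a).
by apply: filterS => w h; apply: h.
Qed.

Lemma uf_bot : {ae lam, forall w, ~ u \bot%O w}.
Proof.
case: hu => _ [_ hb _ _ _].
have := ae_mle (mu_ \bot%O) measurable0 hb.
by apply: filterS => w h /h.
Qed.

Lemma uf_compl a : {ae lam, forall w, u a w -> u (Order.compl a) w -> False}.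
Proof.
have f1 := uf_meet a (Order.compl a); have f2 := uf_bot.
near=> w => h1 h2.
have hb : ~ u \bot%O w by near: w; exact: f2.
have hm : u a w -> u (Order.compl a) w -> u (Order.meet a (Order.compl a)) w by near: w; exact: f1.
by have := hm h1 h2; rewrite meetxC; exact: hb.
Unshelve. all: by end_near.
Qed.

Definition xe (c a : A) : A :=
  Order.join (Order.meet c (Order.compl a)) (Order.meet (Order.compl c) a).

Lemma uf_xor c a :
  {ae lam, forall w, u (xe c a) w <-> ~ (u c w <-> u a w)}.
Proof.
set X := Order.meet c (Order.compl a).
set Y := Order.meet (Order.compl c) a.
have f1 := uf_ult X. have f2 := uf_ult Y.
have f3 := uf_meet (Order.compl X) (Order.compl Y).
have f4 := uf_compl (xe c a).
have f5 := uf_le (leIl c (Order.compl a)).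
have f6 := uf_le (leIr (Order.compl a) c).
have f7 := uf_le (leIl (Order.compl c) a).
have f8 := uf_le (leIr a (Order.compl c)).
have f9 := uf_compl a. have f10 := uf_compl c.
have f11 := uf_ult a. have f12 := uf_ult c.
have f13 := uf_meet c (Order.compl a).
have f14 := uf_meet (Order.compl c) a.
have f15 := uf_le (leUl X Y). have f16 := uf_le (leUr Y X).
rewrite -complU in f3.
have F := aeI f1 (aeI f2 (aeI f3 (aeI f4 (aeI f5 (aeI f6
  (aeI f7 (aeI f8 (aeI f9 (aeI f10 (aeI f11 (aeI f12
  (aeI f13 (aeI f14 (aeI f15 f16)))))))))))))).
apply: aeS F => w [g1 [g2 [g3 [g4 [g5 [g6 [g7 [g8 [g9 [g10 [g11 [g12
  [g13 [g14 [g15 g16]]]]]]]]]]]]]]].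
rewrite /xe -/X -/Y in g4 g15 g16 *.
have [hc|hc] := pselect (u c w); have [ha|ha] := pselect (u a w);
  have [hX|hX] := pselect (u X w); have [hY|hY] := pselect (u Y w);
  have [he|he] := pselect (u (Order.join X Y) w); try tauto.
Qed.

End Ult.

Section Main.
Context (R : realType) (K : Type) (lam : {measure set (cantor_cube K) -> \bar R}).
Hypothesis lamT : lam setT = 1%E.
Local Notation T := (cantor_cube K).
Context (d : Order.disp_t) (A : ctbDistrLatticeType d) (u v : A -> set T).
Hypotheses (hu : ultrafilter_name lam u) (hv : ultrafilter_name lam v).

Definition D a := symdiff (u a) (v a).

Lemma mD a : measurable (D a).
Proof.
case: hu => mu _; case: hv => mv _.
by apply: measurableU; apply: measurableD.
Qed.

Lemma D_xor c a : {ae lam, forall w, symdiff (D c) (D a) w -> D (xe c a) w}.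
Proof.
have F := aeI (uf_xor hu c a) (uf_xor hv c a).
apply: aeS F => w [h1 h2]; move: h1 h2; rewrite /D /symdiff /setD /setU /=.
have [?|?] := pselect (u c w); have [?|?] := pselect (u a w);
have [?|?] := pselect (v c w); have [?|?] := pselect (v a w); tauto.
Qed.

Inductive finU : set T -> Prop :=
| finU0 : finU set0
| finUS W a : finU W -> finU (W `|` D a).

Lemma finU_m W : finU W -> measurable W.
Proof. by elim => // W' a _ mW; apply: measurableU => //; exact: mD. Qed.

Lemma finU_U W1 W2 : finU W1 -> finU W2 -> finU (W1 `|` W2).
Proof.
move=> h1; elim => [|W a _ IH]; first by rewrite setU0.
by rewrite setUA; exact: finUS.
Qed.

Lemma key W : finU W -> forall G, measurable G ->
  exists c, mu lam (W `&` G) <= 2 * mu lam (D c `&` G).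
Proof.
move=> fW; elim: W / fW => [|W a fW IH] G mG.
  by exists \top%O; rewrite set0I /mu measure0 /= mulr_ge0 // mu_ge0.
have mW := finU_m fW.
have mGa : measurable (G `\` D a) by apply: measurableD => //; exact: mD.
have [c hc] := IH _ mGa.
set Da := D a; set Dc := D c; set Dc' := D (xe c a).
have mDa : measurable Da := mD a.
have mDc : measurable Dc := mD c.
have mDc' : measurable Dc' := mD (xe c a).
have i : mu lam ((W `|` Da) `&` G) <= mu lam (Da `&` G) + mu lam (W `&` (G `\` Da)).
  have m1 : measurable ((W `|` Da) `&` G) by apply: measurableI => //; exact: measurableU.
  have m3 : measurable (Da `&` G) by exact: measurableI.
  have m4 : measurable (W `&` (G `\` Da)) by exact: measurableI.
  have s1 : (W `|` Da) `&` G `<=` (Da `&` G) `|` (W `&` (G `\` Da)).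
    move=> w [[Ww|Daw] Gw]; last by left.
    by have [?|?] := pselect (Da w); [left|right].
  have := mu_le lamT m1 (measurableU _ _ m3 m4) s1.
  have := mu_U2 lamT m3 m4; lra.
have iii : mu lam (Dc `&` G) = mu lam (Dc `&` (G `\` Da)) + mu lam ((Dc `&` G) `&` Da).
  by rewrite setIDA; apply: mu_DI => //; exact: measurableI.
have h5 : mu lam (Da `&` G) = mu lam ((Da `&` G) `\` Dc) + mu lam ((Da `&` G) `&` Dc).
  by apply: mu_DI => //; exact: measurableI.
have vi : (Da `&` G) `&` Dc = (Dc `&` G) `&` Da.
  by apply/seteqP; split => w [[? ?] ?].
have iv : mu lam (Dc `&` (G `\` Da)) + mu lam ((Da `&` G) `\` Dc) <= mu lam (Dc' `&` G).
  rewrite -mu_U //; last 3 first.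
  - exact: measurableI.
  - by apply: measurableD => //; exact: measurableI.
  - by apply/seteqP; split => w // [[? ?] [? ?]].
  apply: ae_mu_le => //.
  - by apply: measurableU; [apply: measurableI|apply: measurableD; [apply: measurableI|]].
  - exact: measurableI.
  apply: aeS (D_xor c a) => w h.
  move=> [[Dcw [Gw nDaw]]|[[Daw Gw] nDcw]]; split => //; apply: h.
  - by left.
  - by right.
rewrite vi in h5.
have [le|le] := leP (mu lam (Dc' `&` G)) (mu lam (Dc `&` G)).
  by exists c; lra.
by exists (xe c a); lra.
Qed.

End Main.

Unset Implicit Arguments. Set Strict Implicit.

Theorem theorem7p6 (R : realType) (K : Type) (hK : infinite_set [set: K])
  (lam : {measure set (cantor_cube K) -> \bar R}) (hlam : std_product_measure lam)
  (d : Order.disp_t) (A : ctbDistrLatticeType d) (hA : atomless A)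
  (u v : A -> set (cantor_cube K))
  (hu : ultrafilter_name lam u) (hv : ultrafilter_name lam v)
  (huv : forces_neq lam u v) :
  forall eps : R, 0 < eps ->
    exists (p : set (cantor_cube K)) (C : A),
      [/\ measurable p, ((4 ^-1 - eps)%:E < lam p)%E
        & mle lam p (symdiff (u C) (v C))].
Proof.
move=> eps heps.
have lamT : lam setT = 1%E.
  have := hlam [::] (fun=> true) (List.NoDup_nil _); rewrite expr0 => <-.
  by congr (lam _); apply/seteqP; split => // f _ i [].
have [[C hC]|H] := pselect (exists C, ((4^-1 - eps)%:E < lam (D u v C))%E).
  exists (D u v C), C; split => //; try exact: (mD hu hv C).
  all: try by rewrite /mle setDv measure0.
have HC C : mu lam (D u v C) <= 4^-1 - eps.
  rewrite -lee_fin -(muE lamT (mD hu hv C)) leNgt; apply/negP => h; apply: H.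
  by exists C.
have bnd W : finU u v W -> mu lam W <= 2 * (4^-1 - eps).
  move=> fW; have [c hc] := key lamT hu hv fW measurableT.
  rewrite !setIT in hc; have := HC c; lra.
set Sset := [set mu lam W | W in finU u v].
have hs : has_sup Sset.
  split; first by exists (mu lam set0); exists set0 => //; exact: finU0.
  by exists (2 * (4^-1 - eps)) => x [W fW <-]; exact: bnd.
set S := sup Sset.
have Sle : S <= 2 * (4^-1 - eps).
  by apply: ge_sup; [case: hs|move=> x [W fW <-]; exact: bnd].
have Sub W : finU u v W -> mu lam W <= S.
  by move=> fW; apply: sup_upper_bound => //; exists W.
have ex n : exists W, finU u v W /\ S - n.+1%:R^-1 < mu lam W.
  have e0 : 0 < n.+1%:R^-1 :> R by rewrite invr_gt0 ltr0n.
  have [y [W fW <-] h] := sup_adherent e0 hs.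
  by exists W.
have [Wf hWf] := choice ex.
pose F n := \big[setU/set0]_(i < n) Wf i.
have fF n : finU u v (F n).
  rewrite /F; elim: n => [|n IH]; first by rewrite big_ord0; exact: finU0.
  by rewrite big_ord_recr /=; apply: finU_U => //; exact: (hWf n).1.
have mF n : measurable (F n) := finU_m hu hv (fF n).
pose E := \bigcup_n F n.
have mE : measurable E := bigcupT_measurable _ mF.
have ndF : nondecreasing_seq F.
  by move=> n m nm; apply/subsetPset; exact: subset_bigsetU.
have hlim := nondecreasing_cvg_mu (mu:=lam) mF mE ndF.
have lamE : (lam E <= S%:E)%E.
  rewrite -(cvg_lim _ hlim) //; apply: lime_le; first exact: cvgP hlim.
  by apply: nearW => n /=; rewrite (muE lamT (mF n)) lee_fin; exact: Sub.
have muES : mu lam E <= S by rewrite -lee_fin -(muE lamT mE).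
have null b : lam (~` E `&` D u v b) = 0%E.
  have mDb := mD hu hv b.
  have mDE : measurable (D u v b `\` E) by exact: measurableD.
  have r n : mu lam (D u v b `\` E) < n.+1%:R^-1.
    have mWn : measurable (Wf n) := finU_m hu hv (hWf n).1.
    have mDW : measurable (D u v b `\` Wf n) by exact: measurableD.
    have h1 : mu lam (D u v b `\` E) <= mu lam (D u v b `\` Wf n).
      apply: (mu_le lamT mDE mDW) => w [Dw nEw]; split => // Ww; apply: nEw.
      by exists n.+1 => //; rewrite /F big_ord_recr /=; right.
    have h2 : mu lam (Wf n `|` D u v b) = mu lam (Wf n) + mu lam (D u v b `\` Wf n).
      rewrite -(mu_U lamT mWn mDW); last by apply/seteqP; split => w // [? []].
      congr (mu lam _); apply/seteqP; split => w [hw|hw]; try by left.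
        by have [?|?] := pselect (Wf n w); [left|right].
      by right; case: hw.
    have h3 := Sub _ (finUS b (hWf n).1).
    have h4 : S - n.+1%:R^-1 < mu lam (Wf n) := (hWf n).2.
    pose q : R := n.+1%:R^-1; apply: (@lt_le_trans _ _ q); last exact: lexx. have h5 : S - q < mu lam (Wf n) := h4. clearbody q; lra.
  have r0 : mu lam (D u v b `\` E) <= 0.
    rewrite leNgt; apply/negP => pos.
    set x := mu lam (D u v b `\` E) in pos r *.
    have := r (Num.truncn (x^-1)); have := truncnS_gt (x^-1).
    set m := (Num.truncn x^-1).+1%:R.
    have m0 : 0 < m by rewrite ltr0n.
    have hx : x * x^-1 = 1 by rewrite mulfV // gt_eqF.
    have hm : m * m^-1 = 1 by rewrite mulfV // gt_eqF.
    move=> h1 h2.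
    have a1 : 1 < x * m by rewrite -hx ltr_pM2l.
    have a2 : x * m < 1 by rewrite -hm [m * _]mulrC ltr_pM2r.
    by have := lt_trans a1 a2; rewrite ltxx.
  rewrite setIC -setDE (muE lamT mDE).
  by congr (_%:E); apply/le_anti; rewrite r0 mu_ge0.
have := huv (~` E) (measurableC mE) null.
have hT := mu_U lamT mE (measurableC mE) (setICr E).
rewrite setUv (mu_T lamT) in hT.
rewrite (muE lamT (measurableC mE)) => /eqP; rewrite eqe => /eqP h0.
exfalso; lra.
Qed.
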